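(* Let $t\ge2$, let $p\ge5$ be a prime, and let $M,N$ be positive integers, $0\le j\le p-1$ and $0\le k\le M-1\le N-1$. Then $$\alpha_t(p,N,j,k)=\alpha_t(p,M,j,k).$$
   Context: $(q)_n=\prod_{k=1}^n(1-q^k)$, $\binom{n}{k}_q=\frac{(q)_n}{(q)_{n-k}(q)_k}$ (zero unless $0\le k\le n$). For $t\ge2$ let $m(t)=2^{t-1}$; $h''(t)=(2^t-1)/3$, $h'(t)=(2^t-4)/3$, $a(t)=(2^{t-1}+1)/3$ if $t$ is even, and $h''(t)=(2^t-2)/3$, $h'(t)=(2^t-5)/3$, $a(t)=(2^t+1)/3$ if $t$ is odd. For an integer $L\ge0$ define the truncation $$\mathscr{F}_t(q;L)=(-1)^{h''(t)}q^{-h'(t)}\sum_{n=0}^{L}(q)_n\sum_{(j_1,\dots,j_{m(t)-1})}q^{\frac{-a(t)+\sum_{\ell}\ell j_\ell}{m(t)}+\sum_{\ell}\binom{j_\ell}{2}}\sum_{k=0}^{m(t)-1}\prod_{\ell=1}^{m(t)-1}\binom{n+I(\ell\le k)}{j_\ell}_q,$$ the middle sum over tuples of nonnegative integers with $3\sum_{\ell=1}^{m(t)-1}\ell j_\ell\equiv1\pmod{m(t)}$ and $I(\ell\le k)=1$ if $\ell\le k$, else $0$; it is a Laurent polynomial in $q$ with integer coefficients. Its $p$-dissection is the unique representation $\mathscr{F}_t(q;L)=\sum_{i=0}^{p-1}q^i\mathcal{A}_{p,t}(L,i,q^p)$ with Laurent polynomials $\mathcal{A}_{p,t}(L,i,x)\in\mathbb{Z}[x,x^{-1}]$.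 For $n\ge1$ define $\alpha_t(p,n,i,k)$ by the power series expansion $\mathcal{A}_{p,t}(pn-1,i,1-q)=\sum_{k\ge0}\alpha_t(p,n,i,k)q^k$. *)

(* Defs.v *)
From HB Require Import structures.
From mathcomp Require Import all_boot all_order all_algebra.
Set Implicit Arguments. Unset Strict Implicit. Unset Printing Implicit Defensive.
Import Order.TTheory GRing.Theory Num.Theory.
Local Open Scope ring_scope.

Definition mt (t : nat) : nat := (2 ^ t.-1)%N.
Definition hpp (t : nat) : nat := if odd t then ((2 ^ t - 2) %/ 3)%N else ((2 ^ t - 1) %/ 3)%N.
Definition hp (t : nat) : nat := if odd t then ((2 ^ t - 5) %/ 3)%N else ((2 ^ t - 4) %/ 3)%N.
Definition at_ (t : nat) : nat := if odd t then ((2 ^ t + 1) %/ 3)%N else ((2 ^ t.-1 + 1) %/ 3)%N.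

Definition qpoch (n : nat) : {poly rat} := \prod_(k < n) (1 - 'X^(k.+1)).

(* Gaussian binomial: (q)_n / ((q)_(n-k) (q)_k), zero unless k <= n.
   The division is exact polynomial division over the field rat. *)
Definition qbinom (n k : nat) : {poly rat} :=
  if (k <= n)%N then qpoch n %/ (qpoch (n - k) * qpoch k) else 0.

(* For a tuple (j_1,...,j_{m-1}) (stored 0-indexed, j_l = js_(l-1)):
   S = sum_l l * j_l. *)
Definition Ssum (m L : nat) (js : m.-1.-tuple 'I_L.+2) : nat :=
  (\sum_(l < m.-1) l.+1 * tnth js l)%N.

(* exponent (-a + S)/m + sum_l binom(j_l,2) (an integer >= 0 under the
   congruence condition) *)
Definition Eexp (t L : nat) (js : (mt t).-1.-tuple 'I_L.+2) : nat :=
  ((Ssum js - at_ t) %/ mt t + \sum_(l < (mt t).-1) 'C(tnth js l, 2))%N.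

(* F_t(q;L) = q^(-h'(t)) * Fpoly t L  (a Laurent polynomial).
   The j_l range over 0..L+1: larger j_l give vanishing q-binomials since
   n + I(l<=k) <= L+1. *)
Definition Fpoly (t L : nat) : {poly rat} :=
  (-1) ^+ hpp t *
  \sum_(n < L.+1) qpoch n *
    \sum_(js : (mt t).-1.-tuple 'I_L.+2 | 3 * Ssum js == 1 %[mod mt t])
      'X^(Eexp js) *
      \sum_(k < mt t) \prod_(l < (mt t).-1) qbinom (n + (l.+1 <= k)) (tnth js l).

(* A Laurent polynomial is represented by a pair (P, s), standing for
   x^(-s) * P(x).  Its coefficient of x^e (e : int): *)
Definition lcoef (P : {poly rat}) (s : nat) (e : int) : rat :=
  if (0 <= e + s%:Z)%R then P`_(absz (e + s%:Z)) else 0.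

Definition Fcoef (t L : nat) (e : int) : rat := lcoef (Fpoly t L) (hp t) e.

(* p-dissection component A_{p,t}(L,i,x), represented as (Adiss_poly, h'(t)):
   its coefficient of x^r is the coefficient of q^(i + p r) in F_t(q;L). *)
Definition Adiss_poly (t p L i : nat) : {poly rat} :=
  \poly_(r < size (Fpoly t L) + hp t)
     Fcoef t L (i%:Z + p%:Z * (r%:Z - (hp t)%:Z)).

Definition Adiss_shift (t : nat) : nat := hp t.

(* Coefficient of q^k in the power series expansion of x^(-s) Q(x) at
   x = 1 - q, i.e. of Q(1-q) * (1-q)^(-s); modulo q^(k+1),
   (1-q)^(-1) = 1 + q + ... + q^k. *)
Definition series_coef (Q : {poly rat}) (s k : nat) : rat :=
  ((Q \Po (1 - 'X)) * (\sum_(j < k.+1) 'X^j) ^+ s)`_k.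

Definition alpha (t p n i k : nat) : rat :=
  series_coef (Adiss_poly t p (p * n).-1 i) (Adiss_shift t) k.

(* Main.v *)
Require Import Defs.
From mathcomp Require Import all_boot all_order all_algebra zify ring lra.
Import GRing.Theory Num.Theory.
Local Open Scope ring_scope.

Definition dis (P : {poly rat}) (s p i : nat) : {poly rat} :=
  \poly_(r < size P + s) lcoef P s (i%:Z + p%:Z * (r%:Z - s%:Z)).

Lemma coef_dis P s p i r : (0 < p)%N ->
  (dis P s p i)`_r = lcoef P s (i%:Z + p%:Z * (r%:Z - s%:Z)).
Proof.
move=> p0; rewrite coef_poly; case: ifP => // /negbT; rewrite -leqNgt => hr.
rewrite /lcoef; case: ifP => // h; rewrite nth_default //.
have -> : (i%:Z + p%:Z * (r%:Z - s%:Z) + s%:Z) = (i + p * (r - s) + s)%N :> int.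
  by rewrite !PoszD PoszM subzn // (leq_trans _ hr) // leq_addl.
rewrite absz_nat. have := leq_pmull (r - s) p0. clear h; move=> H; set a := size P in hr *; set b := (p * (r - s))%N in H *. lia.
Qed.

Lemma dis_sub P Q s p i : (0 < p)%N -> dis (P - Q) s p i = dis P s p i - dis Q s p i.
Proof.
move=> p0; apply/polyP => r; rewrite coefB !coef_dis // /lcoef coefB.
by case: ifP => //; rewrite subr0.
Qed.

Lemma aux_shift (x : int) n (G : {poly rat}) :
  (if 0 <= x then (if (absz x < n)%N then 0 else G`_(absz x - n)) else 0)
  = (if 0 <= x - n%:Z then G`_(absz (x - n%:Z)) else 0).
Proof.
case: x => [m|m].
  rewrite subr_ge0 /= lez_nat; case: (ltnP m n) => h.
    by [].
  by rewrite subzn // absz_nat.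
have -> : (0 <= Negz m) = false by [].
have -> : (0 <= Negz m - n%:Z) = false by apply/negbTE; rewrite NegzE; lia.
by [].
Qed.

Lemma dis_shift G s p i a : (i < p)%N ->
  dis ('X^(p*a) * G) s p i = 'X^a * dis G s p i.
Proof.
move=> ip; have p0 : (0 < p)%N by apply: leq_ltn_trans ip.
apply/polyP => r; rewrite coefXnM !coef_dis // /lcoef coefXnM.
case: (ltnP r a) => hra.
  case: ifP => // h; rewrite ifT //.
  rewrite -ltz_nat abszE ger0_norm // PoszM.
  have : (r%:Z + 1 <= a%:Z) by lia.
  have : (i%:Z + 1 <= p%:Z) by lia.
  have : (0 <= s%:Z) by [].
  nia.
rewrite (aux_shift _ (p*a)).
have -> : i%:Z + p%:Z * (r%:Z - s%:Z) + s%:Z - (p * a)%N%:Z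
   = i%:Z + p%:Z * ((r - a)%N%:Z - s%:Z) + s%:Z.
  by rewrite PoszM -subzn //; ring.
by [].
Qed.

Definition PM (q M : nat) : {poly rat} := \prod_(l < M) (1 - 'X^(q * l.+1)).

Lemma dis_PM G s p i M : (i < p)%N ->
  dis (PM p M * G) s p i = PM 1 M * dis G s p i.
Proof.
move=> ip; have p0 : (0 < p)%N by apply: leq_ltn_trans ip.
elim: M G => [|M IH] G; first by rewrite /PM !big_ord0 !mul1r.
rewrite /PM !big_ord_recr /= -!mulrA IH mulrBl mul1r dis_sub // dis_shift //.
by rewrite mul1n mulrBl mul1r.
Qed.

Definition series_coef' := series_coef.

Lemma series_sub A B s k : series_coef (A - B) s k = series_coef A s k - series_coef B s k.
Proof. by rewrite /series_coef comp_polyB mulrBl coefB. Qed.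

Lemma PM1_comp M : exists R, PM 1 M \Po (1 - 'X) = 'X^M * R.
Proof.
elim: M => [|M [R IH]]; first by exists 1; rewrite /PM big_ord0 mulr1 -polyC1 comp_polyC.
rewrite /PM big_ord_recr /= comp_polyM -/(PM 1 M) IH comp_polyB -polyC1 comp_polyC mul1n comp_Xn_poly.
rewrite polyC1.
have H : (1 - (1 - 'X) ^+ M.+1 : {poly rat}) = 'X * \sum_(i < M.+1) (1 - 'X) ^+ i.
  rewrite -[X in X - _](expr1n _ M.+1) subrXX.
  have -> : (1 - (1 - 'X) : {poly rat}) = 'X by ring.
  by congr (_ * _); apply: eq_bigr => i _; rewrite expr1n mul1r.
rewrite H; exists (R * \sum_(i < M.+1) (1 - 'X) ^+ i).
rewrite exprSr; ring.
Qed.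

Lemma series_PM M Q s k : (k < M)%N -> series_coef (PM 1 M * Q) s k = 0.
Proof.
move=> kM; rewrite /series_coef comp_polyM.
have [R ->] := PM1_comp M.
by rewrite -!mulrA coefXnM kM.
Qed.

Lemma qpochE n : qpoch n = \prod_(0 <= k < n) (1 - 'X^(k.+1)).
Proof. by rewrite big_mkord. Qed.

Lemma qpoch_split m n : (m <= n)%N ->
  qpoch n = qpoch m * \prod_(m <= k < n) (1 - 'X^(k.+1)).
Proof.
move=> mn; rewrite !qpochE.
by rewrite (big_cat_nat (leq0n m) mn).
Qed.

Lemma PM_qpoch p M n : (0 < p)%N -> (p * M <= n)%N -> PM p M %| qpoch n.
Proof.
move=> p0 hn; apply: (@dvdp_trans _ (qpoch (p * M))); last first.
  by rewrite (qpoch_split _ _ hn) dvdp_mulr.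
elim: M {hn} => [|M IH]; first by rewrite /PM big_ord0 dvd1p.
rewrite /PM big_ord_recr /= -/(PM p M).
have le1 : (p * M <= p * M.+1)%N by rewrite leq_mul2l leqnSn orbT.
rewrite (qpoch_split _ _ le1) dvdp_mul //.
case: p p0 {le1 IH} => [//|p'] _.
have -> : (p'.+1 * M.+1 = (p'.+1 * M + p').+1)%N by rewrite mulnS; lia.
rewrite big_nat_recr ?leq_addr //= dvdp_mull //.
Qed.

Lemma sum_tuple_restrict (m n L : nat) (F : seq nat -> {poly rat}) : (n <= L)%N ->
  (forall s, size s = m -> has (fun x => n.+1 < x)%N s -> F s = 0) ->
  \sum_(js : m.-tuple 'I_L.+2) F (map val js) =
  \sum_(js : m.-tuple 'I_n.+2) F (map val js).
Proof.
move=> nL HF.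
have nL2 : (n.+2 <= L.+2)%N by [].
rewrite (bigID (fun js : m.-tuple 'I_L.+2 => all (fun x : 'I_L.+2 => (x < n.+2)%N) js)) /=.
rewrite [X in _ + X]big1 ?addr0; last first.
  move=> js; rewrite -has_predC => hh; apply: HF; first by rewrite size_map size_tuple.
  rewrite has_map.
  by apply: sub_has hh => x /=; rewrite -leqNgt.
rewrite (reindex_onto (fun js : m.-tuple 'I_n.+2 => map_tuple (widen_ord nL2) js)
   (fun js : m.-tuple 'I_L.+2 => map_tuple (fun x : 'I_L.+2 => inord x : 'I_n.+2) js)).
  apply: eq_big => js.
    rewrite all_map; apply/andP; split.
      by apply/allP => x _ /=; exact: ltn_ord.
    apply/eqP/val_inj => /=; rewrite -map_comp; apply: map_id_in => x _.
    by apply: val_inj => /=; rewrite inordK.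
  by move=> _; rewrite /= -map_comp.
move=> js /allP hall; apply: val_inj => /=; rewrite -map_comp; apply: map_id_in => x hx.
by apply: val_inj => /=; rewrite inordK //; apply: hall.
Qed.

Definition Ss (m : nat) (s : seq nat) : nat := (\sum_(l < m) l.+1 * nth 0 s l)%N.
Definition Ee t (s : seq nat) : nat :=
  ((Ss (mt t).-1 s - at_ t) %/ mt t + \sum_(l < (mt t).-1) 'C(nth 0 s l, 2))%N.
Definition FF t n (s : seq nat) : {poly rat} :=
  if (3 * Ss (mt t).-1 s == 1 %[mod mt t])%N then
    'X^(Ee t s) * \sum_(k < mt t) \prod_(l < (mt t).-1) qbinom (n + (l.+1 <= k)) (nth 0 s l)
  else 0.
Definition GG t n : {poly rat} := \sum_(js : (mt t).-1.-tuple 'I_n.+2) FF t n (map val js).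

Lemma tnth_val m K (js : m.-tuple 'I_K.+1) l : (tnth js l : nat) = nth 0 (map val js) l.
Proof. by rewrite (nth_map ord0) ?size_tuple // -tnth_nth. Qed.

Lemma Fpoly_GG t L : Fpoly t L = (-1) ^+ hpp t * \sum_(n < L.+1) qpoch n * GG t n.
Proof.
rewrite /Fpoly; congr (_ * _); apply: eq_bigr => n _; congr (_ * _).
rewrite /GG -(sum_tuple_restrict (mt t).-1 n L (FF t n) (ltn_ord n)); last first.
  move=> s hs /(has_nthP 0) [l hl hx]; rewrite /FF; case: ifP => // _.
  rewrite big1 ?mulr0 // => k _.
  rewrite hs in hl; rewrite (bigD1 (Ordinal hl)) //= /qbinom ifF ?mul0r //.
  apply/negbTE; rewrite -ltnNge; have := leq_b1 (l < k)%N; move: (nat_of_bool _) => b; move: (nth _ s l) hx => x hx; lia.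
rewrite big_mkcond; apply: eq_bigr => js _.
have eS : Ssum js = Ss (mt t).-1 (map val js).
  by rewrite /Ssum /Ss; apply: eq_bigr => l _; rewrite tnth_val.
have eE : Eexp js = Ee t (map val js).
  rewrite /Eexp /Ee eS; congr (_ + _)%N; apply: eq_bigr => l _; by rewrite tnth_val.
rewrite /FF eS eE; case: ifP => // _; congr (_ * _); apply: eq_bigr => k _.
by apply: eq_bigr => l _; rewrite tnth_val.
Qed.

Theorem lemma4p4 (t p M N j k : nat) :
  (2 <= t)%N -> prime p -> (5 <= p)%N -> (0 < M)%N -> (0 < N)%N ->
  (j <= p - 1)%N -> (k <= M - 1)%N -> (M - 1 <= N - 1)%N ->
  alpha t p N j k = alpha t p M j k.
Proof.
move=> t2 pp p5 M0 N0 jp kM MN.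
have p0 : (0 < p)%N by lia.
have jp' : (j < p)%N by lia.
have kM' : (k < M)%N by lia.
have MN' : (M <= N)%N by lia.
apply/eqP; rewrite -subr_eq0; apply/eqP.
rewrite /alpha -series_sub.
change (Adiss_poly t p (p*N).-1 j) with (dis (Fpoly t (p*N).-1) (hp t) p j).
change (Adiss_poly t p (p*M).-1 j) with (dis (Fpoly t (p*M).-1) (hp t) p j).
rewrite -dis_sub //.
have hdiv : PM p M %| Fpoly t (p*N).-1 - Fpoly t (p*M).-1.
  rewrite !Fpoly_GG -mulrBr dvdp_mull //.
  rewrite -!(big_mkord (fun _ => true) (fun n => qpoch n * GG t n)).
  have hle : ((p*M).-1.+1 <= (p*N).-1.+1)%N.
    rewrite !prednK ?muln_gt0 ?p0 ?M0 ?N0 //; by rewrite leq_mul2l MN' orbT.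
  rewrite (big_cat_nat (leq0n (p*M).-1.+1) hle) /= addrC addrK.
  rewrite big_nat_cond; apply: (big_ind (fun x => PM p M %| x)); first exact: dvdp0.
    by move=> x y hx hy; apply: dvdp_add.
  move=> n /andP [/andP [h1 _] _]; apply: dvdp_mulr; apply: PM_qpoch => //.
  by rewrite prednK ?muln_gt0 ?p0 ?M0 in h1.
rewrite -(divpK hdiv) mulrC dis_PM // series_PM //.
Qed.
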